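(* Let $G$ be a simple graph of order $n$ and $m\ge 3$. Let $\alpha'(G)$ be the size of a maximum matching $M$ of $G$ and $l=n-2\alpha'(G)$ the number of $M$-unsaturated vertices of $G$. Then $s(G\circ C_m)=n\,s(C_m)+\alpha'(G)+l$ if $m\equiv 0\pmod 3$, and $s(G\circ C_m)=n\,s(C_m)$ otherwise.
   Context: A matching in a graph is a set of edges no two of which share a vertex; it is maximal if it is not properly contained in another matching, and maximum if it has the largest possible size. A vertex is $M$-unsaturated if no edge of $M$ is incident to it. The saturation number $s(G)$ is the minimum cardinality of a maximal matching of $G$. $C_m$ is the cycle on $m$ vertices; $s(C_m)=\lceil m/3\rceil$. The corona $G_1\circ G_2$ is obtained by taking one copy of $G_1$ and $|V(G_1)|$ disjoint copies of $G_2$, and joining the $i$-th vertex of $G_1$ by an edge to every vertex of the $i$-th copy of $G_2$. *)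

(* Defs.v *)
From mathcomp Require Import all_boot.
Set Implicit Arguments. Unset Strict Implicit. Unset Printing Implicit Defensive.

(* A simple graph is a symmetric irreflexive relation e on a finType T.
   An edge {x,y} is represented by the 2-element set [set x; y]. *)

Definition is_matching (T : finType) (e : rel T) (M : {set {set T}}) : bool :=
  [forall A in M, exists x, exists y, e x y && (A == [set x; y])] &&
  [forall A in M, forall B in M, (A != B) ==> [disjoint A & B]].

Definition is_maximal_matching (T : finType) (e : rel T) (M : {set {set T}}) : bool :=
  is_matching e M &&
  [forall N : {set {set T}}, ~~ (is_matching e N && (M \proper N))].

Definition matching_number (T : finType) (e : rel T) : nat :=
  \max_(M : {set {set T}} | is_matching e M) #|M|.

(* s(G): minimum cardinality of a maximal matching (default #|T| is never
   attained spuriously: maximal matchings exist and have size <= #|T|). *)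
Definition saturation_number (T : finType) (e : rel T) : nat :=
  \big[minn/#|T|]_(M : {set {set T}} | is_maximal_matching e M) #|M|.

(* The cycle C_m on vertex set 'I_m (a simple cycle for m >= 3). *)
Definition cycle_rel (m : nat) : rel 'I_m :=
  fun i j => (nat_of_ord j == i.+1 %% m) || (nat_of_ord i == j.+1 %% m).

(* Corona G o C_m: vertices inl v (copy of G) and inr (v, i) (i-th vertex of
   the copy of C_m attached to v). *)
Definition corona_rel (T : finType) (e : rel T) (m : nat) : rel (T + (T * 'I_m)) :=
  fun a b =>
    match a, b with
    | inl x, inl y => e x y
    | inl x, inr (y, _) => x == y
    | inr (y, _), inl x => x == y
    | inr (x, i), inr (y, j) => (x == y) && cycle_rel i j
    end.
Arguments corona_rel [T] e m : rename.
Arguments cycle_rel : clear implicits.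

(* Main.v *)
Require Import Defs.
From mathcomp Require Import all_boot.
From mathcomp Require Import zify.
Set Implicit Arguments. Unset Strict Implicit. Unset Printing Implicit Defensive.


Definition covd (U : finType) (M : {set {set U}}) (x : U) := [exists A in M, x \in A].

Section Gen.
Variables (U : finType) (r : rel U).

Lemma disj_of (A B : {set U}) : (forall x, x \in A -> x \in B -> False) -> [disjoint A & B].
Proof.
move=> H; rewrite -setI_eq0; apply/eqP/setP => z; rewrite !inE.
by apply/negbTE/andP => [[zA zB]]; apply: (H z).
Qed.

Lemma matchingP (M : {set {set U}}) :
  (forall A, A \in M -> exists x y, r x y /\ A = [set x; y]) ->
  (forall A B x, A \in M -> B \in M -> x \in A -> x \in B -> A = B) ->
  is_matching r M.
Proof.
move=> H1 H2; apply/andP; split.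
  apply/forall_inP => A /H1 [x [y [rxy ->]]]; apply/existsP; exists x.
  by apply/existsP; exists y; rewrite rxy eqxx.
apply/forall_inP => A AM; apply/forall_inP => B BM; apply/implyP => neq.
apply: disj_of => z zA zB.
by rewrite (H2 A B z) ?eqxx in neq.
Qed.

Lemma matching_edge M A : is_matching r M -> A \in M -> exists x y, r x y /\ A = [set x; y].
Proof.
case/andP => /forall_inP H _ /H /existsP [x /existsP [y /andP [rxy /eqP ->]]].
by exists x, y.
Qed.

Lemma matching_disj M A B x : is_matching r M -> A \in M -> B \in M -> x \in A -> x \in B -> A = B.
Proof.
case/andP => _ /forall_inP H AM BM xA xB.
have := H A AM => /forall_inP /(_ B BM) /implyP.
case: eqVneq => // _ /(_ isT) => /disjoint_setI0 /setP /(_ x).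
by rewrite !inE xA xB.
Qed.

Lemma maximal_of_cov M : is_matching r M -> (forall x y, r x y -> covd M x || covd M y) ->
  is_maximal_matching r M.
Proof.
move=> mM Hc; apply/andP; split => //.
apply/forallP => N; apply/negP => /andP [mN /properP [sub [A AN AnM]]].
have [x [y [rxy eA]]] := matching_edge mN AN.
have : covd M x || covd M y := Hc x y rxy.
case/orP => /existsP [B /andP [BM zB]].
  have xA : x \in A by rewrite eA !inE eqxx.
  have eAB := matching_disj mN AN (subsetP sub B BM) xA zB.
  by rewrite eAB BM in AnM.
have yA : y \in A by rewrite eA !inE eqxx orbT.
have eAB := matching_disj mN AN (subsetP sub B BM) yA zB.
by rewrite eAB BM in AnM.
Qed.

Lemma cov_of_maximal M x y : is_maximal_matching r M -> r x y -> covd M x || covd M y.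
Proof.
case/andP => mM /forallP Hmax rxy; apply/negPn/negP; rewrite negb_or => /andP [nx ny].
have := Hmax ([set x; y] |: M); case/negP; apply/andP; split.
  apply: matchingP.
    move=> A; rewrite !inE => /orP [/eqP ->|AM]; first by exists x, y.
    exact: matching_edge mM AM.
  have key : forall A z, A \in M -> z \in A -> z \in [set x; y] -> False.
    move=> A z AM zA; rewrite !inE => /orP [] /eqP ez; subst z.
      by case/negP: nx; apply/existsP; exists A; rewrite AM zA.
    by case/negP: ny; apply/existsP; exists A; rewrite AM zA.
  move=> A B z; rewrite !inE => /orP [/eqP ->|AM] /orP [/eqP ->|BM] zA zB //.
  - by case: (key B z BM zB zA).
  - by case: (key A z AM zA zB).
  - exact: matching_disj mM AM BM zA zB.
apply/properP; split; first exact: subsetUr.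
exists [set x; y]; first by rewrite !inE eqxx.
apply/negP => xyM; case/negP: nx; apply/existsP; exists [set x; y].
by rewrite xyM !inE eqxx.
Qed.

Lemma bigmin_le (I : finType) (P : pred I) (f : I -> nat) d i0 :
  P i0 -> \big[minn/d]_(i | P i) f i <= f i0.
Proof.
rewrite /index_enum; have : i0 \in Finite.enum I by rewrite -enumT mem_enum.
elim: (Finite.enum I) => //= a s IH; rewrite inE big_cons => /orP [/eqP <- ->|].
  exact: geq_minl.
move=> /IH h /h {}h; case: (P a) => //; exact: leq_trans (geq_minr _ _) h.
Qed.

Lemma bigmin_ge (I : finType) (P : pred I) (f : I -> nat) d b :
  (forall i, P i -> b <= f i) -> b <= d -> b <= \big[minn/d]_(i | P i) f i.
Proof.
move=> H hd; apply: (big_ind (fun x => b <= x)) => //.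
by move=> x y hx hy; rewrite leq_min hx hy.
Qed.

Lemma sat_le M : is_maximal_matching r M -> saturation_number r <= #|M|.
Proof. exact: bigmin_le. Qed.

Lemma sat_ge b : (forall M, is_maximal_matching r M -> b <= #|M|) -> b <= #|U| ->
  b <= saturation_number r.
Proof. exact: bigmin_ge. Qed.

Lemma matching_cover M : irreflexive r -> is_matching r M -> #|cover M| = 2 * #|M|.
Proof.
move=> irr mM.
have tM : trivIset M.
  apply/trivIsetP => A B AM BM neq; apply: disj_of => z zA zB.
  by rewrite (matching_disj mM AM BM zA zB) eqxx in neq.
rewrite -(eqP tM) mulnC -sum_nat_const; apply: eq_bigr => A AM.
have [x [y [rxy ->]]] := matching_edge mM AM.
rewrite cards2; case: eqVneq rxy => // ->; by rewrite irr.
Qed.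

Lemma matching_card2 M : irreflexive r -> is_matching r M -> 2 * #|M| <= #|U|.
Proof. by move=> irr mM; rewrite -matching_cover // max_card. Qed.

End Gen.

Lemma card_bigcup_le (T I : finType) (P : pred I) (F : I -> {set T}) :
  #|\bigcup_(i | P i) F i| <= \sum_(i | P i) #|F i|.
Proof.
pose K := fun (X : {set T}) n => #|X| <= n.
change (K (\bigcup_(i | P i) F i) (\sum_(i | P i) #|F i|)).
apply: (big_ind2 K) => //; first by rewrite /K cards0.
move=> X1 n1 X2 n2 h1 h2; exact: leq_trans (leq_card_setU X1 X2).1 (leq_add h1 h2).
by move=> i _; rewrite /K.
Qed.


Section Cyc.
Variable p : nat.
Hypothesis hp : 2 <= p.
Local Notation m := p.+1.
Local Notation cr := (cycle_rel p.+1).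

Definition dom (B : {set 'I_m}) := B :|: (@ordS m) @^-1: B.

Lemma cr_ordS (i : 'I_m) : cr i (ordS i).
Proof. by rewrite /cycle_rel /= eqxx. Qed.

Lemma cr_cases (i j : 'I_m) : cr i j -> j = ordS i \/ i = ordS j.
Proof. by case/orP => /eqP h; [left|right]; apply: val_inj. Qed.

Lemma cyc_dom (I : finType) (P : pred I) (f : I -> {set 'I_m}) (w : I -> nat) :
 (forall i : 'I_m, (i \in \bigcup_(a | P a) f a) || (ordS i \in \bigcup_(a | P a) f a)) ->
 (forall a, P a -> #|dom (f a)| <= w a) -> m <= \sum_(a | P a) w a.
Proof.
move=> Hc Hw.
have sub : [set: 'I_m] \subset \bigcup_(a | P a) dom (f a).
  apply/subsetP => i _; case/orP: (Hc i) => /bigcupP [a Pa ia]; apply/bigcupP;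
    exists a => //; by rewrite !inE ia ?orbT.
rewrite -{1}(card_ord m) -cardsT; apply: leq_trans (subset_leq_card sub) _.
apply: leq_trans (card_bigcup_le _ _) _; exact: leq_sum.
Qed.

Lemma dom_le2 B : #|dom B| <= 2 * #|B|.
Proof.
rewrite /dom; apply: leq_trans (leq_card_setU _ _).1 _.
rewrite card_preimset; [lia | exact: (@ordS_inj m)].
Qed.

Lemma dom_pair a b : cr a b -> #|dom [set a; b]| <= 3.
Proof.
move=> h; have h2 : #|[set a; b]| <= 2 by rewrite cards2; case: (a != b).
have h1 : 0 < #|[set a; b] :&: (@ordS m) @^-1: [set a; b]|.
  apply/card_gt0P; case: (cr_cases h) => ->.
    by exists a; rewrite !inE !eqxx ?orbT.
  by exists b; rewrite !inE !eqxx ?orbT.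
rewrite /dom cardsU card_preimset; last exact: (@ordS_inj m).
move: h1 h2; set X := #|_ :&: _|; set Y := #|[set a; b]|; lia.
Qed.

Lemma cyc_lb M : is_maximal_matching cr M -> p.+3 %/ 3 <= #|M|.
Proof.
move=> mx; have mM : is_matching cr M by case/andP: mx.
have : m <= \sum_(A in M) 3.
  apply: (@cyc_dom _ (fun A => A \in M) id).
    move=> i; have := cov_of_maximal mx (cr_ordS i).
    by case/orP => /existsP [A /andP [AM iA]]; apply/orP; [left|right];
      apply/bigcupP; exists A.
  move=> A AM; have [x [y [rxy ->]]] := matching_edge mM AM; exact: dom_pair.
rewrite sum_nat_const; lia.
Qed.

Definition q := m %/ 3.
Definition E (t : nat) : {set 'I_m} := [set inord t; inord t.+1].

Lemma E_edge t : t.+1 < m -> cr (inord t) (inord t.+1).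
Proof. move=> h; rewrite /cycle_rel !inordK ?(modn_small h) ?eqxx //; lia. Qed.

Lemma E_val t (z : 'I_m) : t.+1 < m -> z \in E t -> val z = t \/ val z = t.+1.
Proof.
move=> h; rewrite !inE => /orP [] /eqP ->; rewrite /= inordK; try lia; by [left|right].
Qed.

Lemma in_E t (i : 'I_m) : (val i == t) || (val i == t.+1) -> t.+1 < m -> i \in E t.
Proof.
move=> h ht; rewrite !inE; case/orP: h => /eqP h; apply/orP; [left|right];
  apply/eqP/val_inj; rewrite /= inordK //; lia.
Qed.

Lemma cyc_cover (c : 'I_m -> bool) :
 (forall i : 'I_m, i < 3 * q -> i %% 3 != 2 -> c i) ->
 (m %% 3 != 0 -> forall i : 'I_m, val i = 3 * q -> c i) ->
 forall i j, cr i j -> c i || c j.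
Proof.
move=> H1 H2.
suff S : forall i j : 'I_m, val j = i.+1 %% m -> c i || c j.
  by move=> i j /orP [] /eqP h; [exact: S | rewrite orbC; exact: S].
move=> i j hj.
have him := ltn_ord i.
have hjm := ltn_ord j.
have hj' : (i.+1 < m /\ (j:nat) = i.+1) \/ (i.+1 = m /\ (j:nat) = 0).
  case: (ltnP i.+1 m) => h; [left|right].
    by rewrite hj modn_small.
  have e : i.+1 = m by lia.
  by rewrite hj e modnn.
case A: (i < 3 * q); case A': (i %% 3 != 2); first by rewrite H1.
all: case B: (j < 3 * q); case B': (j %% 3 != 2); first (by rewrite (H1 j) ?orbT).
all: first [ by move: A A' B B'; rewrite /q; lia
  | (have [hm hq] : m %% 3 != 0 /\ (i:nat) = 3 * q by move: A A' B B'; rewrite /q; lia);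
    by rewrite (H2 hm i hq)
  | (have [hm hq] : m %% 3 != 0 /\ (j:nat) = 3 * q by move: A A' B B'; rewrite /q; lia);
    by rewrite (H2 hm j hq) orbT ].
Qed.


Definition Pc : {set {set 'I_m}} :=
  [set E (3 * j) | j : 'I_q] :|: (if m %% 3 == 0 then set0 else [set E (3 * q).-1]).

Lemma q_bound : 3 * q <= m.
Proof. rewrite /q; lia. Qed.

Lemma q_pos : 0 < q.
Proof. rewrite /q; lia. Qed.

Lemma Pc_mem A : A \in Pc ->
  (exists j : 'I_q, A = E (3 * j)) \/ (m %% 3 != 0 /\ A = E (3 * q).-1).
Proof.
rewrite !inE => /orP [/imsetP [j _ ->]|]; first by left; exists j.
by case: ifP => h; rewrite ?inE // => /eqP ->; right.
Qed.

Lemma Pc_matching : is_matching cr Pc.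
Proof.
have qb := q_bound; have qp := q_pos.
apply: matchingP.
  move=> A /Pc_mem [[j ->]|[h ->]].
    exists (inord (3 * j)), (inord (3 * j).+1); split => //; apply: E_edge.
    have := ltn_ord j; lia.
  exists (inord (3 * q).-1), (inord (3 * q).-1.+1); split => //; apply: E_edge.
  move: h; rewrite /q; lia.
move=> A B z /Pc_mem hA /Pc_mem hB.
case: hA => [[j ->]|[h ->]]; case: hB => [[j' ->]|[h' ->]] zA zB //.
- have l1 := ltn_ord j; have l2 := ltn_ord j'.
  have b1 : (3 * j).+1 < m by lia.
  have b2 : (3 * j').+1 < m by lia.
  have := E_val b1 zA; have := E_val b2 zB => h1 h2.
  have e : (j:nat) = j' by lia.
  by rewrite e.
- have l1 := ltn_ord j; move: h'; rewrite /q => h.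
  have b1 : (3 * j).+1 < m by lia.
  have b2 : (3 * (m %/ 3)).-1.+1 < m by lia.
  have := E_val b1 zA; have := E_val b2 zB; lia.
- have l1 := ltn_ord j'; move: h; rewrite /q => h.
  have b1 : (3 * j').+1 < m by lia.
  have b2 : (3 * (m %/ 3)).-1.+1 < m by lia.
  have := E_val b1 zB; have := E_val b2 zA; lia.
Qed.

Lemma Pc_maximal : is_maximal_matching cr Pc.
Proof.
have qb := q_bound; have qp := q_pos.
apply: maximal_of_cov; first exact: Pc_matching.
apply: cyc_cover.
  move=> i hi h2; apply/existsP.
  have hj : (i %/ 3) < q by lia.
  exists (E (3 * Ordinal hj)); apply/andP; split.
    by rewrite inE; apply/orP; left; apply/imsetP; exists (Ordinal hj).
  apply: in_E => /=; lia.
move=> h i hi; apply/existsP; exists (E (3 * q).-1); apply/andP; split.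
  by rewrite /Pc (negbTE h) inE set11 orbT.
apply: in_E; move: hi h qp; rewrite /q /=; lia.
Qed.

Lemma Pc_card : #|Pc| <= p.+3 %/ 3.
Proof.
rewrite /Pc; apply: leq_trans (leq_card_setU _ _).1 _.
have h1 := leq_imset_card (fun j : 'I_q => E (3 * j)) 'I_q.
rewrite card_ord in h1.
case: ifP => h; rewrite ?cards0 ?cards1; move: h1 h; rewrite /q; set X := #|_|; lia.
Qed.

Lemma cyc_sat : saturation_number cr = p.+3 %/ 3.
Proof.
apply/eqP; rewrite eqn_leq; apply/andP; split.
  exact: leq_trans (sat_le Pc_maximal) Pc_card.
apply: sat_ge; first exact: cyc_lb.
rewrite card_ord; lia.
Qed.

End Cyc.


Lemma cardP (U : finType) (M : {set U}) (P : pred U) :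
  #|[set A in M | P A]| = \sum_(A in M) (P A : nat).
Proof.
rewrite -sum1_card; rewrite (eq_bigl (fun A => (A \in M) && P A)); last by move=> A; rewrite inE.
rewrite big_mkcondr /=; apply: eq_bigr => A _; by case: (P A).
Qed.

Lemma cardPT (U : finType) (P : pred U) :
  #|[set A | P A]| = \sum_(A : U) (P A : nat).
Proof.
rewrite -sum1_card; rewrite (eq_bigl (fun A => P A)); last by move=> A; rewrite inE.
rewrite big_mkcond /=; apply: eq_bigr => A _; by case: (P A).
Qed.

Lemma sum_eqS (T : finType) (o : option T) : \sum_(v : T) (o == Some v : nat) = (o != None).
Proof.
case: o => [w|] /=; last by rewrite big1.
rewrite (bigD1 w) //= eqxx big1 // => v hv; apply/eqP; rewrite eqb0; apply/eqP; case=> e;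
  by rewrite e eqxx in hv.
Qed.

Lemma arA p s w b : 2 <= p -> s <= 1 -> 0 < s -> p.+1 + s <= 3 * w ->
  (p.+1 + 2) %/ 3 + ((p.+1 %% 3 == 0) && b) <= w.
Proof. by case: (boolP (p.+1 %% 3 == 0)) => h; case: b => /=; move: h; lia. Qed.
Lemma arB p w : 2 <= p -> p.+1 + 0 <= 3 * w -> (p.+1 + 2) %/ 3 + ((p.+1 %% 3 == 0) && ~~ true) <= w.
Proof. by rewrite andbF; lia. Qed.
Lemma arC p w b : 2 <= p -> p.+1 <= 2 * w -> (p.+1 + 2) %/ 3 + ((p.+1 %% 3 == 0) && b) <= w.
Proof. by case: (boolP (p.+1 %% 3 == 0)) => h; case: b => /=; move: h; lia. Qed.

Lemma sum_card_T (U : finType) (P : pred U) : \sum_(v : U) (P v : nat) + \sum_(v : U) (~~ P v : nat) = #|U|.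
Proof.
rewrite -big_split /= (eq_bigr (fun _ => 1)); last by move=> v _; case: (P v).
by rewrite sum1_card.
Qed.
Lemma sumc (U : finType) c : \sum_(v : U) c = #|U| * c.
Proof. by rewrite sum_nat_const. Qed.

Section Cor.
Variables (T : finType) (e : rel T).
Hypothesis e_sym : symmetric e.
Hypothesis e_irr : irreflexive e.
Variable p : nat.
Hypothesis hp : 2 <= p.
Local Notation m := p.+1.
Local Notation V := (T + T * 'I_p.+1)%type.
Local Notation R := (corona_rel e p.+1).
Local Notation cr := (cycle_rel p.+1).

Lemma inr_eq (a b : T * 'I_m) : (inr a == inr b :> V) = (a == b).
Proof. by apply/eqP/eqP => [[]|->]. Qed.
Lemma inl_eq (a b : T) : (inl a == inl b :> V) = (a == b).
Proof. by apply/eqP/eqP => [[]|->]. Qed.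
Lemma inlr_eq a b : (inl a == inr b :> V) = false.
Proof. by apply/eqP. Qed.
Lemma inrl_eq a b : (inr b == inl a :> V) = false.
Proof. by apply/eqP. Qed.

Definition own (A : {set V}) : option T :=
  if [pick z : T * 'I_m | inr z \in A] is Some z then Some z.1 else None.

Definition fv (v : T) (A : {set V}) : {set 'I_m} := [set i | inr (v, i) \in A].
Definition projL (A : {set V}) : {set T} := [set x | inl x \in A].

Lemma Mshape M A : is_matching R M -> A \in M ->
 [\/ exists a b, A = [set inl a; inl b] /\ e a b,
     exists v i, A = [set inl v; inr (v,i)]
   | exists v i j, A = [set inr (v,i); inr (v,j)] /\ cr i j].
Proof.
move=> mM AM; have [x [y [rxy ->]]] := matching_edge mM AM.
move: rxy; case: x => [a|[v i]]; case: y => [b|[w j]] /=.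
- by move=> h; constructor 1; exists a, b; split.
- by move=> /eqP <-; constructor 2; exists a, j.
- by move=> /eqP ->; constructor 2; exists v, i; rewrite setUC.
- by case/andP => /eqP <- h; constructor 3; exists v, i, j; split.
Qed.

Lemma own_G a b : own [set inl a; inl b] = None.
Proof. by rewrite /own; case: pickP => // z; rewrite !inE. Qed.

Lemma own_S v i : own [set inl v; inr (v,i)] = Some v.
Proof.
rewrite /own; case: pickP => [z|/(_ (v,i))]; rewrite !inE ?eqxx ?orbT //=.
by move=> /eqP [->].
Qed.

Lemma own_C v i j : own [set inr (v,i); inr (v,j)] = Some v.
Proof.
rewrite /own; case: pickP => [z|/(_ (v,i))]; rewrite !inE ?eqxx ?orbT //=.
by case/orP => /eqP [->].
Qed.

Lemma fv_S v i : fv v [set inl v; inr (v,i)] = [set i].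
Proof. by apply/setP => k; rewrite !inE inrl_eq inr_eq /= xpair_eqE eqxx. Qed.

Lemma fv_C v i j : fv v [set inr (v,i); inr (v,j)] = [set i; j].
Proof. by apply/setP => k; rewrite !inE !inr_eq /= !xpair_eqE eqxx. Qed.

Lemma fv_card v A : #|fv v A| <= #|A|.
Proof.
have inj : injective (fun i : 'I_m => (inr (v, i) : V)) by move=> i j [].
rewrite -(card_imset _ inj); apply: subset_leq_card; apply/subsetP => x /imsetP [i].
by rewrite inE => h ->.
Qed.

Lemma projL_card A : #|projL A| <= #|A|.
Proof.
have inj : injective (fun x : T => (inl x : V)) by move=> i j [].
rewrite -(card_imset _ inj); apply: subset_leq_card; apply/subsetP => x /imsetP [i].
by rewrite inE => h ->.
Qed.

Lemma Mcard2 M A : is_matching R M -> A \in M -> #|A| <= 2.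
Proof. by move=> mM AM; have [x [y [_ ->]]] := matching_edge mM AM; rewrite cards2; case: (x != y). Qed.

Section LB.
Variable M : {set {set V}}.
Hypothesis mx : is_maximal_matching R M.
Let mM : is_matching R M. Proof. by case/andP: mx. Qed.

Definition gpart := [set A in M | own A == None].
Definition W v := [set A in M | own A == Some v].
Definition gc v := [exists A in gpart, inl v \in A].

Lemma M_inr A v i : A \in M -> inr (v,i) \in A -> A \in W v.
Proof.
move=> AM; rewrite inE AM /=.
case: (Mshape mM AM) => [[a [b [-> _]]]|[w [j ->]]|[w [j [k [-> _]]]]]; rewrite !inE ?inl_eq ?inr_eq ?inlr_eq ?inrl_eq //=.
  by move=> /eqP [-> _]; rewrite own_S.
by rewrite own_C; case/orP => /eqP [-> _].
Qed.

Lemma M_inl A v : A \in M -> inl v \in A -> A \notin W v -> A \in gpart.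
Proof.
move=> AM; rewrite !inE AM /=.
case: (Mshape mM AM) => [[a [b [-> _]]]|[w [j ->]]|[w [j [k [-> _]]]]]; rewrite !inE ?inl_eq ?inr_eq ?inlr_eq ?inrl_eq //=.
- by rewrite own_G.
- by rewrite own_S => /orP [/eqP -> |//]; rewrite eqxx.
Qed.

Lemma W_bound v : (m + 2) %/ 3 + ((m %% 3 == 0) && ~~ gc v) <= #|W v|.
Proof.
have dom_w : forall A, A \in W v -> #|dom (fv v A)| + (inl v \in A) <= 3.
  move=> A; rewrite inE => /andP [AM /eqP oA].
  case: (Mshape mM AM) => [[a [b [eA _]]]|[w [i eA]]|[w [i [j [eA hc]]]]]; subst A.
  - by rewrite own_G in oA.
  - rewrite own_S in oA; case: oA => ew; subst w.
    rewrite fv_S; have := dom_le2 hp [set i]; rewrite cards1 !inE eqxx /=; lia.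
  - rewrite own_C in oA; case: oA => ew; subst w.
    rewrite fv_C; have := dom_pair hp hc; rewrite !inE /=; lia.
set s := \sum_(A in W v) (inl v \in A : nat).
have hs : s <= 1.
  rewrite /s -cardP; apply/card_le1_eqP => A B; rewrite !inE.
  case/andP => /andP [AM _] iA /andP [/andP [BM _] iB].
  exact: matching_disj mM BM AM iB iA.
have hdom : m + s <= 3 * #|W v|.
  have := @cyc_dom p _ (fun A => A \in W v) (fv v) (fun A => 3 - (inl v \in A)) _ _.
  have -> : 3 * #|W v| = \sum_(A in W v) ((3 - (inl v \in A)) + (inl v \in A)).
    rewrite mulnC -sum_nat_const; apply: eq_bigr => A _; by case: (inl v \in A).
  rewrite big_split /= -/s leq_add2r; apply; last by move=> A /dom_w; case: (inl v \in A) => /= h; lia.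
  move=> i; have := cov_of_maximal mx (_ : R (inr (v,i)) (inr (v, ordS i))).
  rewrite /= eqxx cr_ordS => /(_ isT).
  case/orP => /existsP [A /andP [AM iA]]; apply/orP; [left|right];
    apply/bigcupP; exists A.
  - exact: M_inr AM iA.
  - by rewrite inE.
  - exact: M_inr AM iA.
  - by rewrite inE.
have m3 : 3 <= m by lia.
have [s0|spos] : s = 0 \/ 0 < s by clearbody s; lia.
2: exact: (arA _ hp hs spos hdom).
case: (boolP (covd M (inl v))) => [/existsP [A /andP [AM iA]]|nc].
  have AW : A \notin W v.
    by apply/negP => AW; move: s0; rewrite /s (bigD1 A) //= iA.
  have gv : gc v by apply/existsP; exists A; rewrite iA (M_inl AM iA AW).
  rewrite s0 in hdom; rewrite gv; exact: (arB hp hdom).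
have cov : forall i, i \in \bigcup_(A in W v) fv v A.
  move=> i; have := cov_of_maximal mx (_ : R (inl v) (inr (v,i))).
  rewrite /= eqxx (negbTE nc) /= => /(_ isT) /existsP [A /andP [AM iA]].
  by apply/bigcupP; exists A; [exact: M_inr AM iA | rewrite inE].
have : m <= 2 * #|W v|.
  apply: (@leq_trans #|[set: 'I_m]|); first by rewrite cardsT card_ord.
  have sub : [set: 'I_m] \subset \bigcup_(A in W v) fv v A by apply/subsetP => i _; exact: cov.
  apply: leq_trans (subset_leq_card sub) _; apply: leq_trans (card_bigcup_le _ _) _.
  rewrite mulnC -sum_nat_const; apply: leq_sum => A; rewrite inE => /andP [AM _].
  exact: leq_trans (fv_card _ _) (Mcard2 mM AM).
by move=> hw; exact: (arC _ hp hw).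
Qed.

Lemma M_card : #|M| = #|gpart| + \sum_(v : T) #|W v|.
Proof.
rewrite /gpart cardP.
rewrite (eq_bigr (fun v => \sum_(A in M) (own A == Some v : nat))); last by move=> v _; rewrite /W cardP.
rewrite exchange_big /=.
have -> : \sum_(A in M) \sum_(v : T) (own A == Some v : nat) = \sum_(A in M) (own A != None : nat).
  by apply: eq_bigr => A _; exact: sum_eqS.
rewrite -big_split /= -sum1_card; apply: eq_bigr => A _; by case: (own A).
Qed.

Lemma gpartM A : A \in gpart -> A \in M.
Proof. by rewrite inE => /andP []. Qed.

Lemma gpart_shape A : A \in gpart -> exists a b, A = [set inl a; inl b] /\ e a b.
Proof.
rewrite inE => /andP [AM /eqP o].
case: (Mshape mM AM) => [//|[w [i eA]]|[w [i [j [eA _]]]]]; subst A.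
  by rewrite own_S in o.
by rewrite own_C in o.
Qed.

Lemma projL_G a b : projL [set inl a; inl b] = [set a; b].
Proof. by apply/setP => k; rewrite !inE !inl_eq. Qed.

Lemma gc_card : #|[set v | gc v]| <= 2 * #|gpart|.
Proof.
apply: (@leq_trans #|\bigcup_(A in gpart) projL A|).
  apply: subset_leq_card; apply/subsetP => v; rewrite inE => /existsP [A /andP [Ag iA]].
  by apply/bigcupP; exists A => //; rewrite inE.
apply: leq_trans (card_bigcup_le _ _) _.
rewrite mulnC -sum_nat_const; apply: leq_sum => A Ag.
exact: leq_trans (projL_card _) (Mcard2 mM (gpartM Ag)).
Qed.

Lemma g_le : #|gpart| <= matching_number e.
Proof.
have mP : is_matching e [set projL A | A in gpart].
  apply: matchingP.
    move=> B /imsetP [A Ag ->]; have [a [b [-> eab]]] := gpart_shape Ag.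
    by exists a, b; rewrite projL_G.
  move=> B1 B2 z /imsetP [A1 g1 ->] /imsetP [A2 g2 ->]; rewrite !inE => z1 z2.
  by rewrite (matching_disj mM (gpartM g1) (gpartM g2) z1 z2).
have inj : {in gpart &, injective projL}.
  move=> A1 A2 g1 g2 eq; have [a [b [eA _]]] := gpart_shape g1.
  have : a \in projL A1 by rewrite eA projL_G !inE eqxx.
  rewrite eq inE => h2.
  apply: (matching_disj mM (gpartM g1) (gpartM g2) _ h2).
  by rewrite eA !inE eqxx.
rewrite -(card_in_imset inj) /matching_number. apply: (@leq_bigmax_cond _ (fun N => is_matching e N) (fun N => #|N|)). exact: mP.
Qed.

Lemma cor_lb_M : (m + 2) %/ 3 * #|T| + (if m %% 3 == 0 then #|T| - matching_number e else 0) <= #|M|.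
Proof.
rewrite M_card.
have h1 : \sum_(v : T) ((m + 2) %/ 3 + ((m %% 3 == 0) && ~~ gc v)) <= \sum_(v : T) #|W v|.
  by apply: leq_sum => v _; exact: W_bound.
rewrite big_split /= sumc in h1.
have h2 := gc_card; have h3 := g_le.
have h4 := sum_card_T gc.
rewrite cardPT in h2.
case: (boolP (m %% 3 == 0)) => hm.
  have e1 : \sum_(v : T) ((m %% 3 == 0) && ~~ gc v : nat) = \sum_(v : T) (~~ gc v : nat).
    by apply: eq_bigr => v _; rewrite hm.
  rewrite e1 in h1.
  move: h1 h2 h3 h4.
  set X := \sum_(v : T) (~~ gc v : nat); set Y := \sum_(v : T) (gc v : nat).
  set Z := \sum_(v : T) #|W v|; set G := #|gpart|. lia.
move: h1; set X := \sum_(v : T) _; set Z := \sum_(v : T) #|W v|. lia.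
Qed.

End LB.

Lemma ord_eq_inord (i : 'I_m) t : t < m -> (i == inord t) = (val i == t).
Proof. by move=> h; rewrite -(inj_eq val_inj) /= inordK. Qed.

Section UB.
Variable H : {set {set T}}.
Hypothesis mH : is_matching e H.
Hypothesis Hcond : m %% 3 != 0 -> H = set0.
Local Notation qq := (m %/ 3).

Definition sidx : 'I_m := inord (if m %% 3 == 0 then 2 else 3 * qq).

Lemma sidx_val : val sidx = if m %% 3 == 0 then 2 else 3 * qq.
Proof. rewrite /sidx /= inordK //; case: ifP; lia. Qed.

Definition imL (B : {set T}) : {set V} := [set (inl x : V) | x in B].
Definition cyc (v : T) (j : 'I_qq) : {set V} := [set inr (v, inord (3 * j)); inr (v, inord (3 * j).+1)].
Definition spk (v : T) : {set V} := [set inl v; inr (v, sidx)].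
Definition Gp : {set {set V}} := [set imL B | B in H].
Definition Cy : {set {set V}} := [set cyc x.1 x.2 | x : T * 'I_qq].
Definition Sp : {set {set V}} := [set spk v | v in ~: cover H].
Definition Mu := Gp :|: Cy :|: Sp.

Lemma j_bound (j : 'I_qq) : (3 * j).+1 < m.
Proof. have := ltn_ord j; lia. Qed.

Lemma inl_imL a B : (inl a \in imL B) = (a \in B).
Proof.
apply/imsetP/idP => [[x xB [->]] //|aB]; by exists a.
Qed.
Lemma inr_imL z B : (inr z \in imL B) = false.
Proof. by apply/imsetP => [[x _]]. Qed.
Lemma inl_cyc a v j : (inl a \in cyc v j) = false.
Proof. by rewrite !inE !inlr_eq. Qed.
Lemma inr_cyc w i v j : (inr (w, i) \in cyc v j) = (w == v) && ((val i == 3 * j) || (val i == (3 * j).+1)).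
Proof.
have hj := j_bound j.
rewrite !inE !inr_eq !xpair_eqE !ord_eq_inord //; last by lia.
by case: (w == v).
Qed.
Lemma inl_spk a v : (inl a \in spk v) = (a == v).
Proof. by rewrite !inE inl_eq inlr_eq orbF. Qed.
Lemma inr_spk w i v : (inr (w, i) \in spk v) = (w == v) && (i == sidx).
Proof. by rewrite !inE inrl_eq inr_eq xpair_eqE. Qed.

Lemma Mu_mem A : A \in Mu ->
  [\/ exists2 B, B \in H & A = imL B,
      exists v j, A = cyc v j
    | exists2 v, v \notin cover H & A = spk v].
Proof.
rewrite !inE => /orP [/orP [] |].
- by move=> /imsetP [B BH ->]; constructor 1; exists B.
- by move=> /imsetP [[v j] _ ->]; constructor 2; exists v, j.
- by move=> /imsetP [v]; rewrite inE => nv ->; constructor 3; exists v.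
Qed.

Lemma Mu_matching : is_matching R Mu.
Proof.
apply: matchingP.
  move=> A /Mu_mem [[B BH ->]|[v [j ->]]|[v _ ->]].
  - have [a [b [eab ->]]] := matching_edge mH BH.
    by exists (inl a), (inl b); rewrite /imL imsetU1 imset_set1.
  - exists (inr (v, inord (3 * j))), (inr (v, inord (3 * j).+1)); split => //=.
    by rewrite eqxx /=; apply: E_edge; [exact: hp | exact: j_bound].
  - by exists (inl v), (inr (v, sidx)); rewrite /= eqxx.
have sv := sidx_val.
move=> A1 A2 z /Mu_mem h1 /Mu_mem h2.
case: z => [a|[w i]].
  case: h1 => [[B1 H1 ->]|[v1 [j1 ->]]|[v1 n1 ->]]; rewrite ?inl_imL ?inl_cyc ?inl_spk // => z1;
  case: h2 => [[B2 H2 ->]|[v2 [j2 ->]]|[v2 n2 ->]]; rewrite ?inl_imL ?inl_cyc ?inl_spk // => z2.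
  - by rewrite (matching_disj mH H1 H2 z1 z2).
  - move/eqP: z2 => ea; subst a; case/negP: n2; by apply/bigcupP; exists B1.
  - move/eqP: z1 => ea; subst a; case/negP: n1; by apply/bigcupP; exists B2.
  - by move/eqP: z1 => <-; move/eqP: z2 => <-.
case: h1 => [[B1 H1 ->]|[v1 [j1 ->]]|[v1 n1 ->]]; rewrite ?inr_imL ?inr_cyc ?inr_spk // => z1;
case: h2 => [[B2 H2 ->]|[v2 [j2 ->]]|[v2 n2 ->]]; rewrite ?inr_imL ?inr_cyc ?inr_spk // => z2.
- case/andP: z1 => /eqP e1 z1; case/andP: z2 => /eqP e2 z2; subst v1 v2.
  have ej : (j1 : nat) = j2 by move: z1 z2; lia.
  by have -> : j1 = j2 by apply: val_inj.
- case/andP: z1 => /eqP e1 z1; case/andP: z2 => /eqP e2 /eqP z2; subst.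
  move: z1 sv; have := ltn_ord j1; case: ifP => hm l1 /orP [] /eqP -> ?; exfalso; lia.
- case/andP: z2 => /eqP e1 z2; case/andP: z1 => /eqP e2 /eqP z1; subst.
  move: z2 sv; have := ltn_ord j2; case: ifP => hm l1 /orP [] /eqP -> ?; exfalso; lia.
- case/andP: z1 => /eqP e1 _; case/andP: z2 => /eqP e2 _; by subst.
Qed.

Lemma covL a : covd Mu (inl a).
Proof.
case: (boolP (a \in cover H)) => [/bigcupP [B BH aB]|na].
  apply/existsP; exists (imL B); rewrite inl_imL aB andbT.
  by rewrite !inE; apply/orP; left; apply/orP; left; apply/imsetP; exists B.
apply/existsP; exists (spk a); rewrite inl_spk eqxx andbT.
by rewrite !inE; apply/orP; right; apply/imsetP; exists a; rewrite ?inE.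
Qed.

Lemma Mu_maximal : is_maximal_matching R Mu.
Proof.
apply: maximal_of_cov; first exact: Mu_matching.
case=> [a|[v i]] [b|[w j]] /=; rewrite ?covL ?orbT //.
case/andP => /eqP <- hc.
apply: (cyc_cover hp (c := fun i => covd Mu (inr (v, i)))) hc.
  move=> k hk hk2; have hj : (k %/ 3) < qq by move: hk; rewrite /q; lia.
  apply/existsP; exists (cyc v (Ordinal hj)); rewrite inr_cyc eqxx /=.
  apply/andP; split; last by lia.
  by rewrite !inE; apply/orP; left; apply/orP; right; apply/imsetP; exists (v, Ordinal hj).
move=> hm k hk; have H0 := Hcond hm.
apply/existsP; exists (spk v); rewrite inr_spk eqxx /=; apply/andP; split.
  rewrite !inE; apply/orP; right; apply/imsetP; exists v => //.
  by rewrite inE H0 /cover big_set0 inE.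
apply/eqP/val_inj; rewrite sidx_val (negbTE hm) hk /q //.
Qed.

Lemma Mu_card : #|Mu| <= #|H| + #|T| * qq + (#|T| - 2 * #|H|).
Proof.
apply: leq_trans (leq_card_setU _ _).1 _.
apply: leq_trans (leq_add (leq_card_setU _ _).1 (leqnn _)) _.
have h1 : #|Gp| <= #|H| by exact: leq_imset_card.
have h2 : #|Cy| <= #|T| * qq.
  apply: leq_trans (leq_imset_card _ _) _; by rewrite card_prod card_ord.
have h3 : #|Sp| <= #|T| - 2 * #|H|.
  apply: leq_trans (leq_imset_card _ _) _.
  have := cardsC (cover H); rewrite (matching_cover e_irr mH); lia.
lia.
Qed.

End UB.
End Cor.


Lemma L0 x a n q : x <= a + n * q + (n - 2 * a) -> x <= n * q + a + (n - 2 * a).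
Proof. lia. Qed.
Lemma L1 n a k s : 2 * a <= n -> k * n + (n - a) <= s -> n * k + a + (n - 2 * a) <= s.
Proof. rewrite mulnC; lia. Qed.
Lemma L2 n a k m : 2 * a <= n -> n * k <= n * m -> n * k + a + (n - 2 * a) <= n + n * m.
Proof. lia. Qed.
Lemma L3 x n q : x <= 0 + n * q + (n - 2 * 0) -> x <= n * q.+1.
Proof. rewrite mulnS; lia. Qed.
Lemma L4 n k s : k * n + 0 <= s -> n * k <= s.
Proof. rewrite mulnC; lia. Qed.
Lemma L5 n k m : n * k <= n * m -> n * k <= n + n * m.
Proof. lia. Qed.

Unset Implicit Arguments.
Set Strict Implicit.

Theorem theorem2p5 (T : finType) (e : rel T)
  (e_sym : symmetric e) (e_irr : irreflexive e) (m : nat) (hm : 3 <= m) :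
  saturation_number (corona_rel e m) =
  if m %% 3 == 0 then
    #|T| * saturation_number (cycle_rel m) + matching_number e
      + (#|T| - 2 * matching_number e)
  else #|T| * saturation_number (cycle_rel m).
Proof.
case: m hm => [|p] // hp.
rewrite (cyc_sat hp).
have m0 : is_matching e set0 by apply: matchingP => // A; rewrite inE.
have [M0 hM0 eM0] := @eq_bigmax_cond _ (fun N : {set {set T}} => is_matching e N) (fun N => #|N|)
  (introT card_gt0P (ex_intro _ set0 m0)).
have eal : matching_number e = #|M0| by exact: eM0.
have h2a : 2 * #|M0| <= #|T| by exact: matching_card2 e_irr hM0.
rewrite eal.
pose H := if p.+1 %% 3 == 0 then M0 else set0.
have mH : is_matching e H by rewrite /H; case: ifP.
have Hc : p.+1 %% 3 != 0 -> H = set0 by rewrite /H => /negbTE ->.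
have ub := leq_trans (sat_le (Mu_maximal hp mH Hc)) (Mu_card e_irr hp mH Hc).
have hk : p.+3 %/ 3 <= p.+1 by lia.
have hnk : #|T| * (p.+3 %/ 3) <= #|T| * p.+1 by exact: leq_mul.
have cV : #|{: (T + T * 'I_p.+1)%type}| = #|T| + #|T| * p.+1 by rewrite card_sum card_prod card_ord.
case: (boolP (p.+1 %% 3 == 0)) => hm.
  have ek : p.+3 %/ 3 = p.+1 %/ 3 by lia.
  have ek2 : (p.+1 + 2) %/ 3 = p.+1 %/ 3 by lia.
  rewrite /H hm /= in ub; rewrite ek in hnk *.
  apply/eqP; rewrite eqn_leq; apply/andP; split.
    exact: (L0 ub).
  apply: sat_ge.
    move=> M mx; have := cor_lb_M hp mx; rewrite hm eal ek2 => h; exact: (L1 h2a h).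
  rewrite cV; exact: (L2 h2a hnk).
have ek : p.+3 %/ 3 = (p.+1 %/ 3).+1 by lia.
have ek2 : (p.+1 + 2) %/ 3 = p.+3 %/ 3 by lia.
rewrite /H (negbTE hm) /= cards0 in ub.
apply/eqP; rewrite eqn_leq; apply/andP; split.
  rewrite ek; exact: (L3 ub).
apply: sat_ge.
  move=> M mx; have := cor_lb_M hp mx; rewrite (negbTE hm) ek2 => h; exact: (L4 h).
rewrite cV; exact: (L5 hnk).
Qed.
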